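(* Let $N$ be a finite set with $|N|\ge 2$. There is a one-to-one correspondence between SE faces of $P_N$ and faces of $C_N$ which preserves inclusion: for SE faces $F_1,F_2$ of $P_N$ with corresponding faces $\bar F_1,\bar F_2$ of $C_N$, $F_1\subseteq F_2$ iff $\bar F_1\subseteq\bar F_2$. Specifically, the SE face of $P_N$ given by a valid inequality $\langle o,\eta\rangle\le u$ with SE objective $o$ corresponds to the face of $C_N$ given by the (valid) inequality $\langle\tau_o,c\rangle\le u$, and the sets of graphs identified with corresponding faces coincide: $\{G\in\mathrm{DAG}(N):\eta_G\in F\}=\{G\in\mathrm{DAG}(N):c_G\in\bar F\}$.
   Context: $\mathrm{DAG}(N)$ is the set of acyclic directed graphs over $N$; $\mathrm{pa}_G(a)$ is the parent set of $a$ in $G$; $G\sim H$ (Markov equivalence) means same adjacencies and same immoralities (induced $a\to c\leftarrow b$, $a,b$ non-adjacent). $\Upsilon=\{(a|B): a\in N,\ \emptyset\neq B\subseteq N\setminus\{a\}\}$; $\eta_G\in\mathbb{R}^{\Upsilon}$ has $\eta_G(a|B)=1$ if $B=\mathrm{pa}_G(a)$, else $0$; $P_N=\mathrm{conv}\{\eta_G:G\in\mathrm{DAG}(N)\}$. $\mathcal{S}=\{S\subseteq N:|S|\ge2\}$; $c_\eta(S)=\sum_{a\in S}\sum_{B:\,S\setminus\{a\}\subseteq B\subseteq N\setminus\{a\}}\eta(a|B)$; $c_G=c_{\eta_G}$; $C_N=\mathrm{conv}\{c_G:G\in\mathrm{DAG}(N)\}$ is the characteristic-imset polytope. $o$ is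 an SE objective if $\langle o,\eta_G\rangle=\langle o,\eta_H\rangle$ whenever $G\sim H$; a face $F$ of $P_N$ is SE if $F=\{v\in P_N:\langle o,v\rangle=u\}$ for some SE objective $o$ and $u$ with $\langle o,v\rangle\le u$ on $P_N$. For an SE objective $o$, $\tau_o\in\mathbb{R}^{\mathcal{S}}$ is $\tau_o(T)=\sum_{\emptyset\neq K\subseteq T\setminus\{b\}}(-1)^{|T\setminus\{b\}|-|K|}o(b|K)$ for any $b\in T$ (independent of $b$), with $o(b|\emptyset)=0$. *)

(* Defs.v *)
From HB Require Import structures.
From mathcomp Require Import all_boot all_order all_algebra.
From mathcomp Require Import classical_sets reals.
From mathcomp Require Import finset.
Set Implicit Arguments. Unset Strict Implicit. Unset Printing Implicit Defensive.
Import Order.TTheory GRing.Theory Num.Theory.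
Local Open Scope ring_scope.

Section Defs.
Variable N : finType.

(* Directed graphs over N: sets of arrows (a,b) meaning a -> b. *)
Definition arrows := {set N * N}.
Definition arrel (G : arrows) : rel N := fun a b => (a, b) \in G.
(* acyclic: no directed cycle (including self-loops) *)
Definition is_dag (G : arrows) : bool :=
  [forall p in G, ~~ connect (arrel G) p.2 p.1].
Definition pa (G : arrows) (a : N) : {set N} := [set b | (b, a) \in G].

Definition adj (G : arrows) (a b : N) : bool := ((a, b) \in G) || ((b, a) \in G).
Definition immorality (G : arrows) (a c b : N) : bool :=
  [&& a != b, (a, c) \in G, (b, c) \in G & ~~ adj G a b].
Definition markov_equiv (G H : arrows) : Prop :=
  (forall a b, adj G a b = adj H a b) /\
  (forall a c b, immorality G a c b = immorality H a c b).

Definition upsP : pred (N * {set N}) := fun p => (p.2 != set0) && (p.1 \notin p.2).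
Local Notation Ups := {p : N * {set N} | upsP p}.
Definition SSP : pred {set N} := fun S => (1 < #|S|)%N.
Local Notation SS := {S : {set N} | SSP S}.

Variable R : realType.

(* value of a vector on (a|B), with 0 outside Upsilon (e.g. o(b|emptyset) = 0) *)
Definition look (f : {ffun Ups -> R}) (a : N) (B : {set N}) : R :=
  match (insub (a, B) : option Ups) with Some x => f x | None => 0 end.

Definition eta (G : arrows) : {ffun Ups -> R} :=
  [ffun x : Ups => ((val x).2 == pa G (val x).1)%:R].

Definition cvec (e : {ffun Ups -> R}) : {ffun SS -> R} :=
  [ffun S : SS => \sum_(a in val S)
       \sum_(B : {set N} | (val S :\ a \subset B) && (a \notin B)) look e a B].

Definition cG (G : arrows) : {ffun SS -> R} := cvec (eta G).

Definition inner (I : finType) (o v : {ffun I -> R}) : R := \sum_(i : I) o i * v i.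

Definition conv_dags (I : finType) (pt : arrows -> {ffun I -> R}) : set {ffun I -> R} :=
  fun v => exists lam : arrows -> R,
    [/\ forall G, 0 <= lam G,
        \sum_(G : arrows | is_dag G) lam G = 1 &
        forall i, v i = \sum_(G : arrows | is_dag G) lam G * pt G i].

Definition PN : set {ffun Ups -> R} := conv_dags eta.
Definition CN : set {ffun SS -> R} := conv_dags cG.

Definition valid (I : finType) (P : set {ffun I -> R}) (o : {ffun I -> R}) (u : R) : Prop :=
  forall v, P v -> inner o v <= u.
Definition face_of (I : finType) (P : set {ffun I -> R}) (o : {ffun I -> R}) (u : R)
  : set {ffun I -> R} := fun v => P v /\ inner o v = u.
Definition is_face (I : finType) (P : set {ffun I -> R}) (F : set {ffun I -> R}) : Prop :=
  exists o u, valid P o u /\ F = face_of P o u.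

Definition SE_objective (o : {ffun Ups -> R}) : Prop :=
  forall G H, is_dag G -> is_dag H -> markov_equiv G H -> inner o (eta G) = inner o (eta H).
Definition SE_face (F : set {ffun Ups -> R}) : Prop :=
  exists o u, [/\ SE_objective o, valid PN o u & F = face_of PN o u].

(* tau_o(T) computed with b := some chosen element of T *)
Definition tau_at (o : {ffun Ups -> R}) (T : {set N}) : R :=
  if [pick b in T] is Some b then
     \sum_(K : {set N} | (K != set0) && (K \subset T :\ b))
        (-1) ^+ (#|T :\ b| - #|K|)%N * look o b K
  else 0.
Definition tau (o : {ffun Ups -> R}) : {ffun SS -> R} :=
  [ffun T : SS => tau_at o (val T)].
End Defs.
Notation Ups N := {p : N * {set N} | @upsP N p}.
Notation SS N := {S : {set N} | @SSP N S}.

(* Main.v *)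
Require Import Defs.
From HB Require Import structures.
From mathcomp Require Import all_boot all_order all_algebra.
From mathcomp Require Import classical_sets reals.
From mathcomp Require Import finset.
Import Order.TTheory GRing.Theory Num.Theory.
Local Open Scope classical_set_scope.
Local Open Scope ring_scope.

Local Close Scope classical_set_scope.
Set Implicit Arguments. Unset Strict Implicit. Unset Printing Implicit Defensive.

Section S.
Variable N : finType.
Variable R : realType.

Lemma sum_sig (T : finType) (P : pred T) (F : T -> R) :
  \sum_(x : {x | P x}) F (val x) = \sum_(t | P t) F t.
Proof.
rewrite (reindex_omap (val : {x | P x} -> T) insub); last first.
  by move=> i Pi; rewrite insubT.
apply: eq_bigl => -[i iP] /=; rewrite iP insubT /=.
by apply/esym/eqP; congr Some; apply: val_inj; rewrite /= SubK.
Qed.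

Lemma look0 (f : {ffun Ups N -> R}) a : look f a set0 = 0.
Proof. by rewrite /look insubF // /upsP /= eqxx. Qed.

Lemma look_eta (G : arrows N) a B : look (@Defs.eta N R G) a B = (upsP (a,B) && (B == pa G a))%:R.
Proof. rewrite /look; case: insubP => [u Pu vu|/negbTE ->] //.
by rewrite ffunE vu Pu. Qed.

End S.

Section S.
Variable N : finType.
Variable R : realType.

Lemma look_sum (f : {ffun Ups N -> R}) a B :
  look f a B = \sum_(x : Ups N) f x * (val x == (a, B))%:R.
Proof.
rewrite /look; case: insubP => [u Pu vu|nP].
  rewrite (bigD1 u) //= vu eqxx mulr1 big1 ?addr0 // => x xu.
  by rewrite -vu val_eqE (negbTE xu) mulr0.
rewrite big1 // => x _; case: eqP => [e|]; last by rewrite mulr0.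
by move: (valP x); rewrite e (negbTE nP).
Qed.

Lemma inner_eta (o : {ffun Ups N -> R}) (G : arrows N) :
  inner o (@Defs.eta N R G) = \sum_a look o a (pa G a).
Proof.
rewrite /inner (eq_bigr (fun a => \sum_(x : Ups N) o x * (val x == (a, pa G a))%:R));
  last by move=> a _; rewrite look_sum.
rewrite exchange_big /=; apply: eq_bigr => x _.
rewrite -mulr_sumr ffunE; congr (_ * _).
rewrite (bigD1 (val x).1) //= big1 ?addr0.
  by case: (val x) => [a B] /=; rewrite xpair_eqE eqxx.
move=> a ha; case: eqP => // e; move: ha; by rewrite e eqxx.
Qed.

End S.

Section S.
Variable N : finType.
Variable R : realType.

Lemma sum_reidx (a : N) (P : pred {set N}) (F : {set N} -> R) :
  \sum_(T : {set N} | P T && (a \in T)) F T = \sum_(L : {set N} | P (a |: L) && (a \notin L)) F (a |: L).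
Proof.
rewrite (reindex_onto (fun L => a |: L) (fun T => T :\ a)); last first.
  by move=> T /andP[_ aT]; rewrite setD1K.
apply: eq_bigl => L; rewrite setU11 andbT; congr (_ && _).
case aL: (a \in L).
  apply/negbTE/eqP => e; have : a \in (a |: L) :\ a by rewrite e.
  by rewrite !inE eqxx.
by rewrite setU1K ?aL ?eqxx.
Qed.

Lemma sum_split (c : N) (D : {set N}) (f : {set N} -> R) : c \in D ->
  \sum_(K : {set N} | K \subset D) f K = \sum_(J : {set N} | J \subset D :\ c) (f J + f (c |: J)).
Proof.
move=> cD; rewrite big_split /= addrC (bigID (fun K : {set N} => c \in K)) /=; congr (_ + _).
  rewrite sum_reidx; apply: eq_bigl => J.
  by rewrite subUset sub1set cD /= subsetD1.
by apply: eq_bigl => J; rewrite subsetD1.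
Qed.

Definition tauX (g : {set N} -> R) (L : {set N}) : R :=
  \sum_(K : {set N} | K \subset L) (-1) ^+ (#|L| - #|K|) * g K.

Lemma tauX_U1 (g : {set N} -> R) (d : N) (L : {set N}) : d \notin L ->
  tauX g (d |: L) = - tauX g L + tauX (fun J => g (d |: J)) L.
Proof.
move=> dL; rewrite /tauX (sum_split _ (setU11 d L)) setU1K // big_split /=.
rewrite -sumrN; congr (_ + _); apply: eq_bigr => J JL.
  have dJ : d \notin J by apply: contra dL => /(fintype.subsetP JL).
  rewrite cardsU1 dL add1n subSn ?subset_leq_card // exprS mulN1r mulNr //.
have dJ : d \notin J by apply: contra dL => /(fintype.subsetP JL).
by rewrite !cardsU1 dL dJ !add1n subSS.
Qed.

Lemma mobius (P : {set N}) (g : {set N} -> R) :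
  \sum_(L : {set N} | L \subset P) tauX g L = g P.
Proof.
move: {2}#|P| (erefl #|P|) => n; elim: n P g => [|n IH] P g hP.
  move/eqP: hP; rewrite cards_eq0 => /eqP ->.
  rewrite (eq_bigl (fun L => L == set0)); last by move=> L; rewrite subset0.
  rewrite big_pred1_eq /tauX (eq_bigl (fun L => L == set0)); last by move=> L; rewrite subset0.
  by rewrite big_pred1_eq cards0 expr0 mul1r.
have [d dP] : exists d, d \in P.
  by apply/set0Pn; rewrite -card_gt0 hP.
rewrite (sum_split _ dP).
rewrite (eq_bigr (fun L => tauX (fun J => g (d |: J)) L)); last first.
  move=> L LP; rewrite tauX_U1 ?addNKr //.
  by apply/negP => /(fintype.subsetP LP); rewrite !inE eqxx.
rewrite -{2}(setD1K dP); apply: (IH _ (fun J => g (d |: J))).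
by move: hP; rewrite (cardsD1 d P) dP add1n => -[].
Qed.

End S.

Section S.
Variable N : finType.
Variable R : realType.

Lemma dag_edge (G : arrows N) x y : is_dag G -> (x, y) \in G -> ~~ connect (arrel G) y x.
Proof. by move=> /forall_inP H xy; exact: (H _ xy). Qed.

Lemma dag_noloop (G : arrows N) a : is_dag G -> (a, a) \notin G.
Proof. by move=> dG; apply/negP => aa; move: (dag_edge dG aa); rewrite connect0. Qed.

Lemma dag_no2 (G : arrows N) a b : is_dag G -> (a, b) \in G -> (b, a) \notin G.
Proof. move=> dG ab; apply/negP => ba; move: (dag_edge dG ab).
by rewrite connect1. Qed.

Lemma a_notin_pa (G : arrows N) a : is_dag G -> a \notin pa G a.
Proof. by move=> dG; rewrite inE dag_noloop. Qed.

Lemma connect_closed_in (G : arrows N) (A : {set N}) y x :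
  (forall u v, u \in A -> (u, v) \in G -> v \in A) ->
  y \in A -> connect (arrel G) y x -> x \in A.
Proof.
move=> cl yA /connectP [p pth ->]; elim: p y yA pth => //= z p IH y yA /andP[yz pth].
by apply: IH pth; apply: cl yA yz.
Qed.

Lemma sink_ex (H : arrows N) (T : {set N}) : is_dag H -> T != set0 ->
  exists2 s, s \in T & forall t, t \in T -> (s, t) \notin H.
Proof.
move=> dH /set0Pn [t0 t0T].
pose reach s := [set y | connect (arrel H) s y].
have [s sT smin] := @arg_minnP _ t0 (fun s => s \in T) (fun s => #|reach s|) t0T.
exists s => // t tT; apply/negP => st.
have := smin t tT; apply/negP; rewrite -ltnNge; apply: proper_card.
apply/properP; split.
  apply/fintype.subsetP => y; rewrite !inE => ty.
  by apply: connect_trans ty; apply: connect1.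
exists s; first by rewrite inE connect0.
by rewrite inE; apply: dag_edge st.
Qed.

Lemma cG_val (G : arrows N) (T : SS N) : is_dag G ->
  @cG N R G T = \sum_(a in val T) ((val T :\ a) \subset pa G a)%:R.
Proof.
move=> dG; rewrite /cG /cvec ffunE; apply: eq_bigr => a aT.
rewrite big_mkcond (bigD1 (pa G a)) //= big1 ?addr0; last first.
  move=> B /negbTE BP; rewrite look_eta BP andbF.
  by case: ifP.
rewrite a_notin_pa // andbT look_eta eqxx andbT /upsP /= a_notin_pa // andbT.
case: ifP => // sub; rewrite (_ : pa G a != set0) //; apply/set0Pn.
have : (0 < #|val T :\ a|)%N.
  by move: (valP T); rewrite /SSP (cardsD1 a) aT add1n ltnS.
rewrite card_gt0 => /set0Pn [x xT]; by exists x; apply: (fintype.subsetP sub).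
Qed.


Lemma cG_01 (G : arrows N) (T : SS N) : is_dag G ->
  @cG N R G T = [exists a in val T, (val T :\ a) \subset pa G a]%:R.
Proof.
move=> dG; rewrite cG_val //; case: existsP => [[a] /andP[aT sa]|ne].
  rewrite (bigD1 a) //= sa big1 ?addr0 // => b /andP[bT ba].
  case sb: (val T :\ b \subset pa G b) => //; exfalso.
  have h1 : (a, b) \in G.
    have : a \in val T :\ b by rewrite !inE eq_sym ba aT.
    by move/(fintype.subsetP sb); rewrite inE.
  have h2 : (b, a) \in G.
    have : b \in val T :\ a by rewrite !inE ba bT.
    by move/(fintype.subsetP sa); rewrite inE.
  by move: (dag_no2 dG h1); rewrite h2.
rewrite big1 // => a aT; case sa: (val T :\ a \subset pa G a) => //; exfalso; apply: ne; exists a.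
by rewrite aT sa.
Qed.

Lemma markov_sub (G H : arrows N) (T : {set N}) a :
  markov_equiv G H -> is_dag H -> a \in T -> (T :\ a) \subset pa G a ->
  exists2 s, s \in T & (T :\ s) \subset pa H s.
Proof.
move=> [hadj himm] dH aT sa.
have T0 : T != set0 by apply/set0Pn; exists a.
have [s sT sink] := sink_ex dH T0.
have GxA : forall y, y \in T -> y != a -> (y, a) \in G.
  move=> y yT ya; have : y \in T :\ a by rewrite !inE ya yT.
  by move/(fintype.subsetP sa); rewrite inE.
exists s => //; apply/fintype.subsetP => x; rewrite !inE => /andP[xs xT].
case: (eqVneq s a) => [esa|sa'].
  subst s; have := hadj x a; rewrite /adj GxA // orTb.
  by move: (sink x xT) => /negbTE -> ; rewrite orbF.
have Hsa : (a, s) \in H.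
  have := hadj s a; rewrite /adj GxA // orTb.
  by move: (sink a aT) => /negbTE ->; rewrite orFb.
case: (eqVneq x a) => [->//|xa].
case adjxs: (adj G x s).
  move: adjxs; rewrite hadj /adj; move: (sink x xT) => /negbTE ->; by rewrite orbF.
have : immorality G x a s by rewrite /immorality xs !GxA // adjxs.
by rewrite himm => /and4P[_ _ h _]; move: (sink a aT); rewrite h.
Qed.

Lemma markov_sym (G H : arrows N) : markov_equiv G H -> markov_equiv H G.
Proof. by move=> [h1 h2]; split=> *; rewrite ?h1 ?h2. Qed.

Lemma cG_markov (G H : arrows N) : is_dag G -> is_dag H -> markov_equiv G H ->
  @cG N R G = @cG N R H.
Proof.
move=> dG dH m; apply/ffunP => T; rewrite !cG_01 //; congr (_%:R).
have imp : forall G' H' : arrows N, is_dag H' -> markov_equiv G' H' ->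
    [exists a in val T, val T :\ a \subset pa G' a] -> [exists a in val T, val T :\ a \subset pa H' a].
  move=> G' H' dH' m' /existsP [a /andP[aT sa]]; apply/existsP.
  by have [s sT ss] := markov_sub m' dH' aT sa; exists s; rewrite sT.
case: (boolP [exists a in val T, val T :\ a \subset pa G a]) => eG;
  case: (boolP [exists a in val T, val T :\ a \subset pa H a]) => eH //.
  by move: (imp _ _ dH m eG); rewrite (negbTE eH).
by move: (imp _ _ dG (markov_sym m) eH); rewrite (negbTE eG).
Qed.

End S.

Section S.
Variable N : finType.
Variable R : realType.

Definition cov (b c : N) (J : {set N}) : arrows N :=
  [set p : N * N | ((p.1 \in J) && ((p.2 == b) || (p.2 == c))) || (p == (b, c))].

Lemma cov_in (b c : N) (J : {set N}) x y : ((x, y) \in cov b c J) =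
  ((x \in J) && ((y == b) || (y == c))) || ((x == b) && (y == c)).
Proof. by rewrite inE xpair_eqE. Qed.

Variables (b c : N) (J : {set N}).
Hypotheses (bc : b != c) (bJ : b \notin J) (cJ : c \notin J).

Lemma pa_cov_b : pa (cov b c J) b = J.
Proof.
apply/setP => y; rewrite inE cov_in eqxx /= (negbTE bc) andbF orbF.
by case: (y \in J).
Qed.

Lemma pa_cov_c : pa (cov b c J) c = b |: J.
Proof.
apply/setP => y; rewrite inE cov_in !inE eqxx orbT andbT andbT orbC.
by [].
Qed.

Lemma pa_cov_o x : x != b -> x != c -> pa (cov b c J) x = set0.
Proof.
move=> xb xc; apply/setP => y; rewrite inE cov_in !inE (negbTE xb) (negbTE xc).
by rewrite andbF andbF.
Qed.

Lemma dag_cov : is_dag (cov b c J).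
Proof.
apply/forall_inP => -[x y]; rewrite cov_in /= => /orP[/andP[xJ hy]|/andP[/eqP-> /eqP->]].
  apply/negP => /(connect_closed_in (A := [set b; c])) h.
  have : x \in [set b; c].
    apply: h; last by rewrite !inE.
    move=> u v /[swap]; rewrite cov_in => /orP[/andP[uJ _]|/andP[_ /eqP->]];
      last by rewrite !inE eqxx orbT.
    by rewrite !inE => /orP[]/eqP e; move: uJ; rewrite e ?(negbTE bJ) ?(negbTE cJ).
  by rewrite !inE => /orP[]/eqP e; move: xJ; rewrite e ?(negbTE bJ) ?(negbTE cJ).
apply/negP => /(connect_closed_in (A := [set c])) h.
have : b \in [set c].
  apply: h; last by rewrite !inE.
  move=> u v /[swap]; rewrite cov_in => /orP[/andP[uJ _]|/andP[/eqP-> _]];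
    rewrite !inE => /eqP e; first by move: uJ; rewrite e (negbTE cJ).
  by move: bc; rewrite e eqxx.
by rewrite inE (negbTE bc).
Qed.


Lemma adj_cov x y : adj (cov b c J) x y = adj (cov c b J) x y.
Proof.
rewrite /adj !cov_in.
by case: (x == b); case: (x == c); case: (y == b); case: (y == c); case: (x \in J); case: (y \in J).
Qed.

Ltac kill := repeat match goal with
  | H : is_true (?u != ?v) |- _ => first [rewrite (negbTE H) | rewrite (eq_sym v u) (negbTE H)]
  | H : is_true (~~ (?u \in ?A)) |- _ => rewrite (negbTE H)
  end.

Lemma imm_cov x z y : immorality (cov b c J) x z y = immorality (cov c b J) x z y.
Proof.
rewrite /immorality -adj_cov !cov_in /adj !cov_in.
have cb : c != b by rewrite eq_sym.
case: (eqVneq x b) => [->|xb]; [|case: (eqVneq x c) => [->|xc]];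
case: (eqVneq y b) => [->|yb]; try (case: (eqVneq y c) => [->|yc]);
case: (eqVneq z b) => [->|zb]; try (case: (eqVneq z c) => [->|zc]);
rewrite ?eqxx; kill; rewrite /= ?andbF ?andbT ?orbF ?orbT //;
by case: (x \in J); case: (y \in J); case: (x == y); case: (z == c).
Qed.

Lemma markov_cov : markov_equiv (cov b c J) (cov c b J).
Proof. by split; [exact: adj_cov | exact: imm_cov]. Qed.

Lemma inner_cov (o : {ffun Ups N -> R}) :
  inner o (@Defs.eta N R (cov b c J)) = look o b J + look o c (b |: J).
Proof.
rewrite inner_eta (bigD1 b) //= (bigD1 c) /=; last by rewrite eq_sym bc.
rewrite pa_cov_b pa_cov_c big1 ?addr0 // => x /andP[xc xb].
by rewrite pa_cov_o // look0.
Qed.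

End S.

Section T.
Variable N : finType.
Variable R : realType.

Lemma SE_cov (o : {ffun Ups N -> R}) (b c : N) (J : {set N}) : SE_objective o -> b != c -> b \notin J -> c \notin J ->
  look o b J + look o c (b |: J) = look o c J + look o b (c |: J).
Proof.
move=> hSE bc bJ cJ; have cb : c != b by rewrite eq_sym.
have := hSE _ _ (dag_cov bc bJ cJ) (dag_cov cb cJ bJ) (markov_cov bc bJ cJ).
by rewrite !inner_cov.
Qed.

Lemma tauX_lin (g h : {set N} -> R) (L : {set N}) :
  - tauX g L + tauX h L = tauX (fun J => h J - g J) L.
Proof.
rewrite /tauX -sumrN -big_split /=; apply: eq_bigr => K _.
by rewrite mulrBr addrC.
Qed.

Lemma eq_tauX (g h : {set N} -> R) (L : {set N}) :
  (forall K : {set N}, K \subset L -> g K = h K) -> tauX g L = tauX h L.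
Proof. by move=> e; apply: eq_bigr => K KL; rewrite e. Qed.

Lemma tau_indep (o : {ffun Ups N -> R}) (T : {set N}) (b c : N) :
  SE_objective o -> b \in T -> c \in T ->
  tauX (look o b) (T :\ b) = tauX (look o c) (T :\ c).
Proof.
move=> hSE bT cT; case: (eqVneq b c) => [->//|bc].
set D := T :\ b :\ c.
have cD : c \notin D by rewrite !inE eqxx.
have bD : b \notin D by rewrite !inE eqxx andbF.
have e1 : T :\ b = c |: D by rewrite setD1K // !inE eq_sym bc.
have e2 : T :\ c = b |: D.
  apply/setP => x; rewrite /D !inE; case: (eqVneq x b) => [->|xb] /=; rewrite ?bT ?(negbTE bc) //; by case: (x == c).
rewrite e1 e2 !tauX_U1 // !tauX_lin; apply: eq_tauX => K KD.
have bK : b \notin K by apply: contra bD => /(fintype.subsetP KD).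
have cK : c \notin K by apply: contra cD => /(fintype.subsetP KD).
have := SE_cov hSE bc bK cK.
move=> h; apply/eqP; rewrite subr_eq addrAC eq_sym subr_eq; apply/eqP.
by rewrite addrC h addrC.
Qed.

End T.

Section S.
Variable N : finType.
Variable R : realType.

Lemma sumSS (G : arrows N) (F : N -> {set N} -> R) :
  (forall a, F a set0 = 0) -> (forall a, a \notin pa G a) ->
  \sum_(T : SS N) \sum_(a in val T) F a (val T :\ a) * ((val T :\ a) \subset pa G a)%:R
  = \sum_a \sum_(L : {set N} | L \subset pa G a) F a L.
Proof.
move=> F0 npa.
rewrite (sum_sig (@SSP N) (fun T : {set N} => \sum_(a in T) F a (T :\ a) * ((T :\ a) \subset pa G a)%:R)).
rewrite (exchange_big_dep predT) //=; apply: eq_bigr => a _.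
rewrite (sum_reidx a (@SSP N) (fun T : {set N} => F a (T :\ a) * ((T :\ a) \subset pa G a)%:R)).
rewrite big_mkcond [RHS]big_mkcond; apply: eq_bigr => L _.
case aL: (a \in L) => /=.
  rewrite andbF; case: ifP => // LP.
  by move: (npa a); rewrite (fintype.subsetP LP a aL).
rewrite andbT setU1K ?aL //.
case LP: (L \subset pa G a); rewrite ?mulr1 ?mulr0; last by case: ifP.
case: ifP => // /negbT; rewrite /SSP cardsU1 aL add1n ltnS card_gt0 negbK => /eqP ->.
by rewrite F0.
Qed.

End S.

Section S.
Variable N : finType.
Variable R : realType.

Lemma tauX0 (g : {set N} -> R) : tauX g set0 = g set0.
Proof.
rewrite /tauX (eq_bigl (fun L => L == set0)); last by move=> L; rewrite subset0.
by rewrite big_pred1_eq cards0 expr0 mul1r.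
Qed.

Lemma tau_at_eq (o : {ffun Ups N -> R}) (T : {set N}) (a : N) :
  SE_objective o -> a \in T -> tau_at o T = tauX (look o a) (T :\ a).
Proof.
move=> hSE aT; rewrite /tau_at; case: pickP => [b bT|none]; last first.
  by move: (none a); rewrite aT.
rewrite -(tau_indep hSE bT aT) /tauX [RHS](bigD1 set0) ?sub0set //= look0 mulr0 add0r.
by apply: eq_bigl => K; rewrite andbC.
Qed.

Lemma main_id (o : {ffun Ups N -> R}) (G : arrows N) : SE_objective o -> is_dag G ->
  inner o (@Defs.eta N R G) = inner (tau o) (@cG N R G).
Proof.
move=> hSE dG; rewrite /inner.
rewrite (eq_bigr (fun T : SS N => \sum_(a in val T)
   tauX (look o a) (val T :\ a) * ((val T :\ a) \subset pa G a)%:R)); last first.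
  move=> T _; rewrite ffunE cG_val // mulr_sumr; apply: eq_bigr => a aT.
  by rewrite (tau_at_eq hSE aT).
rewrite (sumSS (F := fun a L => tauX (look o a) L)); last by move=> a; exact: a_notin_pa.
  have := inner_eta o G; rewrite /inner => ->.
  by apply: eq_bigr => a _; rewrite mobius.
by move=> a; rewrite tauX0 look0.
Qed.

Definition extc (c : {ffun SS N -> R}) (S : {set N}) : R :=
  if insub S is Some s then c s else 0.

Definition ocv (c : {ffun SS N -> R}) : {ffun Ups N -> R} :=
  [ffun x : Ups N => \sum_(L : {set N} | L \subset (val x).2) extc c ((val x).1 |: L)].

Lemma look_oc (c : {ffun SS N -> R}) a B : upsP (a, B) ->
  look (ocv c) a B = \sum_(L : {set N} | L \subset B) extc c (a |: L).
Proof.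
rewrite /look; case: insubP => [u _ vu|/negP//] _.
by rewrite ffunE vu.
Qed.

Lemma extc1 (c : {ffun SS N -> R}) a : extc c [set a] = 0.
Proof. by rewrite /extc insubF // /SSP cards1. Qed.

Lemma oc_id (c : {ffun SS N -> R}) (G : arrows N) : is_dag G ->
  inner (ocv c) (@Defs.eta N R G) = inner c (@cG N R G).
Proof.
move=> dG; rewrite inner_eta /inner.
rewrite (eq_bigr (fun T : SS N => \sum_(a in val T)
   extc c (a |: (val T :\ a)) * ((val T :\ a) \subset pa G a)%:R)); last first.
  move=> T _; rewrite cG_val // mulr_sumr; apply: eq_bigr => a aT.
  by rewrite setD1K // /extc valK.
rewrite (sumSS (F := fun a L => extc c (a |: L))); last by move=> a; exact: a_notin_pa.
  apply: eq_bigr => a _.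
  case: (eqVneq (pa G a) set0) => [e|ne].
    rewrite e look0 (eq_bigl (fun L => L == set0)); last by move=> L; rewrite subset0.
    by rewrite big_pred1_eq setU0 extc1.
  by rewrite look_oc // /upsP /= ne a_notin_pa.
by move=> a; rewrite setU0 extc1.
Qed.

Lemma oc_SE (c : {ffun SS N -> R}) : SE_objective (ocv c).
Proof.
move=> G H dG dH m; rewrite !oc_id //; congr inner; exact: cG_markov.
Qed.

End S.

Local Open Scope classical_set_scope.
Section S.
Variable N : finType.
Variable R : realType.
Variable I : finType.
Variable pt : arrows N -> {ffun I -> R}.

Lemma inner_conv (w v : {ffun I -> R}) (lam : arrows N -> R) :
  (forall i, v i = \sum_(G : arrows N | is_dag G) lam G * pt G i) ->
  inner w v = \sum_(G : arrows N | is_dag G) lam G * inner w (pt G).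
Proof.
move=> hv; rewrite /inner (eq_bigr (fun i => \sum_(G : arrows N | is_dag G) lam G * (w i * pt G i))).
  by rewrite exchange_big /=; apply: eq_bigr => G _; rewrite mulr_sumr.
by move=> i _; rewrite hv mulr_sumr; apply: eq_bigr => G _; rewrite mulrCA.
Qed.

Lemma vertex (G : arrows N) : is_dag G -> conv_dags pt (pt G).
Proof.
move=> dG; exists (fun H => (H == G)%:R); split.
- by move=> H; rewrite ler0n.
- by rewrite (bigD1 G) //= eqxx big1 ?addr0 // => H /andP[_ /negbTE ->].
- move=> i; rewrite (bigD1 G) //= eqxx mul1r big1 ?addr0 // => H /andP[_ /negbTE ->].
  by rewrite mul0r.
Qed.

Lemma valid_vertices (w : {ffun I -> R}) (u : R) :
  (forall G, is_dag G -> inner w (pt G) <= u) -> valid (conv_dags pt) w u.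
Proof.
move=> h v [lam [l0 l1 hv]]; rewrite (inner_conv w hv).
have -> : u = \sum_(G : arrows N | is_dag G) lam G * u by rewrite -mulr_suml l1 mul1r.
by apply: ler_sum => G dG; apply: ler_wpM2l => //; apply: h.
Qed.

Lemma valid_vertex (w : {ffun I -> R}) (u : R) G :
  valid (conv_dags pt) w u -> is_dag G -> inner w (pt G) <= u.
Proof. by move=> h dG; apply: h; apply: vertex. Qed.

Lemma face_lam (w v : {ffun I -> R}) (u : R) (lam : arrows N -> R) :
  valid (conv_dags pt) w u -> (forall G, 0 <= lam G) ->
  \sum_(G : arrows N | is_dag G) lam G = 1 ->
  (forall i, v i = \sum_(G : arrows N | is_dag G) lam G * pt G i) ->
  (inner w v = u <-> forall G, is_dag G -> lam G != 0 -> inner w (pt G) = u).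
Proof.
move=> hval l0 l1 hv; rewrite (inner_conv w hv).
have eu : u = \sum_(G : arrows N | is_dag G) lam G * u by rewrite -mulr_suml l1 mul1r.
have key : (\sum_(G : arrows N | is_dag G) lam G * inner w (pt G) == u) =
    (\sum_(G : arrows N | is_dag G) lam G * (u - inner w (pt G)) == 0).
  have -> : \sum_(G : arrows N | is_dag G) lam G * (u - inner w (pt G)) =
     u - \sum_(G : arrows N | is_dag G) lam G * inner w (pt G).
    by rewrite {2}eu -sumrB; apply: eq_bigr => G _; rewrite mulrBr.
  by rewrite subr_eq0 eq_sym.
have nn : forall G, is_dag G -> 0 <= lam G * (u - inner w (pt G)).
  by move=> G dG; rewrite mulr_ge0 // subr_ge0; apply: valid_vertex.
split.
  move/eqP; rewrite key => /eqP /psumr_eq0P h G dG lG.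
  have := h nn G dG; move/eqP; rewrite mulf_eq0 (negbTE lG) /= subr_eq0.
  by move/eqP.
move=> h; apply/eqP; rewrite key; apply/eqP; apply: big1 => G dG.
by case: (eqVneq (lam G) 0) => [->|lG]; rewrite ?mul0r // h // subrr mulr0.
Qed.

Lemma face_sub (w1 w2 : {ffun I -> R}) (u1 u2 : R) :
  valid (conv_dags pt) w1 u1 -> valid (conv_dags pt) w2 u2 ->
  (face_of (conv_dags pt) w1 u1 `<=` face_of (conv_dags pt) w2 u2 <->
   forall G, is_dag G -> inner w1 (pt G) = u1 -> inner w2 (pt G) = u2).
Proof.
move=> v1 v2; split.
  by move=> h G dG e; have [] := h (pt G) (conj (vertex dG) e).
move=> h v [[lam [l0 l1 hv]] e]; split; first by exists lam.
apply/(face_lam v2 l0 l1 hv) => G dG lG; apply: h => //.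
by move/(face_lam v1 l0 l1 hv): e; apply.
Qed.

Lemma inner_agree (w1 w2 v : {ffun I -> R}) :
  (forall G, is_dag G -> inner w1 (pt G) = inner w2 (pt G)) ->
  conv_dags pt v -> inner w1 v = inner w2 v.
Proof.
move=> h [lam [_ _ hv]]; rewrite (inner_conv w1 hv) (inner_conv w2 hv).
by apply: eq_bigr => G dG; rewrite h.
Qed.

End S.

Unset Implicit Arguments.
Local Open Scope classical_set_scope.
Local Open Scope ring_scope.

Theorem corollary5 (R : realType) (N : finType) (hN : (1 < #|N|)%N) :
  exists Phi : set {ffun Ups N -> R} -> set {ffun SS N -> R},
  [/\ (forall F, SE_face F -> is_face (@CN N R) (Phi F)) /\
      (forall F1 F2, SE_face F1 -> SE_face F2 -> Phi F1 = Phi F2 -> F1 = F2),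
      (forall Fb, is_face (@CN N R) Fb -> exists2 F, SE_face F & Phi F = Fb),
      (forall F1 F2, SE_face F1 -> SE_face F2 -> (F1 `<=` F2 <-> Phi F1 `<=` Phi F2)),
      (forall o u, SE_objective o -> valid (@PN N R) o u ->
         valid (@CN N R) (tau o) u /\
         Phi (face_of (@PN N R) o u) = face_of (@CN N R) (tau o) u) &
      (forall F, SE_face F -> forall G : arrows N, is_dag G ->
         (F (@Defs.eta N R G) <-> Phi F (@cG N R G)))].
Proof.
pose Phi := fun F : set {ffun Ups N -> R} =>
  (fun v => @CN N R v /\ forall o u, SE_objective o -> valid (@PN N R) o u ->
     F = face_of (@PN N R) o u -> inner (tau o) v = u) : set {ffun SS N -> R}.
have vtau : forall o u, SE_objective o -> valid (@PN N R) o u -> valid (@CN N R) (tau o) u.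
  move=> o u hSE hv; apply: valid_vertices => G dG; rewrite -main_id //.
  exact: valid_vertex hv dG.
have PhiE : forall o u, SE_objective o -> valid (@PN N R) o u ->
    Phi (face_of (@PN N R) o u) = face_of (@CN N R) (tau o) u.
  move=> o u hSE hv; apply/seteqP; split => v.
    by move=> [cv h]; split => //; apply: h.
  move=> [cv e]; split => // o' u' hSE' hv' eF.
  have [lam [l0 l1 hl]] := cv.
  apply/(face_lam (vtau _ _ hSE' hv') l0 l1 hl) => G dG lG.
  rewrite -main_id //.
  have : face_of (@PN N R) o u (@Defs.eta N R G).
    split; first exact: vertex.
    rewrite main_id //; move/(face_lam (vtau _ _ hSE hv) l0 l1 hl): e; exact.
  by rewrite eF => -[].
have sub4 : forall o1 u1 o2 u2, SE_objective o1 -> valid (@PN N R) o1 u1 ->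
    SE_objective o2 -> valid (@PN N R) o2 u2 ->
    (face_of (@PN N R) o1 u1 `<=` face_of (@PN N R) o2 u2 <->
     face_of (@CN N R) (tau o1) u1 `<=` face_of (@CN N R) (tau o2) u2).
  move=> o1 u1 o2 u2 s1 v1 s2 v2; split => h.
    apply/(face_sub (vtau _ _ s1 v1) (vtau _ _ s2 v2)) => G dG; rewrite -!main_id //.
    exact: (proj1 (face_sub v1 v2) h G dG).
  apply/(face_sub v1 v2) => G dG; rewrite !main_id //.
  exact: (proj1 (face_sub (vtau _ _ s1 v1) (vtau _ _ s2 v2)) h G dG).
exists Phi; split.
- split.
  + move=> F [o [u [hSE hv ->]]]; rewrite PhiE //; exists (tau o), u; split => //.
    exact: vtau.
  + move=> F1 F2 [o1 [u1 [s1 v1 ->]]] [o2 [u2 [s2 v2 ->]]]; rewrite !PhiE // => e.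
    by apply/seteqP; split; apply/sub4 => //; rewrite e => x.
- move=> Fb [c [u [hv ->]]].
  have vo : valid (@PN N R) (ocv c) u.
    apply: valid_vertices => G dG; rewrite oc_id //; exact: valid_vertex hv dG.
  exists (face_of (@PN N R) (ocv c) u).
    by exists (ocv c), u; split => //; exact: oc_SE.
  have ag : forall v, @CN N R v -> inner (tau (ocv c)) v = inner c v.
    move=> v cv; apply: inner_agree cv => G dG.
    rewrite -main_id //; [exact: oc_id | exact: oc_SE].
  rewrite PhiE //; last exact: oc_SE.
  by apply/seteqP; split => v [cv e]; split => //; rewrite -e ag.
- move=> F1 F2 [o1 [u1 [s1 v1 ->]]] [o2 [u2 [s2 v2 ->]]]; rewrite !PhiE //.
  exact: sub4.
- move=> o u hSE hv; split; [exact: vtau | exact: PhiE].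
- move=> F [o [u [hSE hv ->]]] G dG; rewrite PhiE //; split => -[_ e]; split.
  + exact: vertex.
  + by rewrite -main_id.
  + exact: vertex.
  + by rewrite main_id.
Qed.
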